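(* Let $t\ge 1$ and let $n_1,\dots,n_k$ be nonnegative integers. Then \[ \mathcal{L}^{(t)}\Big(\prod_{i=1}^{k} U^{(t)}_{n_i}(x)\Big) \] equals the number of noncrossing set partitions of the totally ordered set $[n_1]\sqcup[n_2]\sqcup\dots\sqcup[n_k]$ in which every block has size $t+1$ and no block is contained in a single $[n_i]$.
   Context: Fix an integer $t\ge1$. For $n\ge 0$ let $P_n$ be the path graph with vertices $1,\dots,n$ and edges $\{i,i+1\}$. A $t$-path in $P_n$ is a set of $t+1$ consecutive vertices $\{i,i+1,\dots,i+t\}$ (together with its $t$ edges). The Chebyshev polynomial of the second kind of order $t$ is $U^{(t)}_n(x)=\sum_{F}(-1)^{|F|}x^{\,n-(t+1)|F|}$, the sum over all families $F$ of pairwise vertex-disjoint $t$-paths in $P_n$ (so $U^{(t)}_0=1$; fixed points get weight $x$, $t$-paths weight $-1$). A set partition of a totally ordered set is noncrossing if there are no $a<b<c<d$ with $a,c$ in one block and $b,d$ in a different block. Let $\mu^{(t)}_m$ be the number of noncrossing set partitions of $[m]=\{1,\dots,m\}$ all of whose blocks have size $t+1$ (with $\mu^{(t)}_0=1$), and let $\mathcal{L}^{(t)}$ be the linear functional on polynomials with $\mathcal{L}^{(t)}(x^m)=\mu^{(t)}_m$. The disjoint union $[n_1]\sqcup\dots\sqcup[n_k]$ is totally ordered by listing $[n_1]$ first (in its natural order), then $[n_2]$, etc. *)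

(* Defs.v *)
From HB Require Import structures.
From mathcomp Require Import all_boot all_order all_algebra.
Set Implicit Arguments. Unset Strict Implicit. Unset Printing Implicit Defensive.
Import Order.TTheory GRing.Theory Num.Theory.
Local Open Scope ring_scope.

(* Vertices of P_n are encoded 0-indexed as 'I_n (vertex v+1 <-> v).
   A family of pairwise vertex-disjoint t-paths is encoded by the set F of
   starting points: each i in F gives the t-path {i,...,i+t} (so i + t < n),
   and distinct starting points give disjoint paths iff they differ by > t. *)
Definition tpath_family (t n : nat) (F : {set 'I_n}) : bool :=
  [forall i in F, (i + t < n)%N] &&
  [forall i in F, forall j in F, (i < j)%N ==> (i + t < j)%N].

Arguments tpath_family : clear implicits.

Definition chebU (t n : nat) : {poly int} :=
  \sum_(F : {set 'I_n} | tpath_family t n F)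
     ((-1) ^+ #|F|) *: 'X^((n - t.+1 * #|F|)%N).

Definition noncrossing (m : nat) (P : {set {set 'I_m}}) : bool :=
  [forall B in P, forall B' in P, forall a : 'I_m, forall b : 'I_m,
     forall c : 'I_m, forall d : 'I_m,
     ~~ [&& B != B', (a < b)%N, (b < c)%N, (c < d)%N,
            a \in B, c \in B, b \in B' & d \in B']].

Arguments noncrossing : clear implicits.

Definition nc_uniform (m s : nat) (P : {set {set 'I_m}}) : bool :=
  [&& partition P [set: 'I_m], noncrossing m P & [forall B in P, #|B| == s]].

Arguments nc_uniform : clear implicits.

Definition mu (t m : nat) : nat := #|[set P | nc_uniform m t.+1 P]|.

Definition Lt (t : nat) (p : {poly int}) : int :=
  \sum_(i < size p) p`_i * (mu t i)%:Z.

(* For ns = [n_1; ...; n_k], the disjoint union [n_1] |_| ... |_| [n_k]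
   with its concatenation order is 'I_(sumn ns); seg ns j is the index i
   (0-based) of the part containing position j. *)
Definition seg (ns : seq nat) (j : nat) : nat :=
  count (fun i => (sumn (take i.+1 ns) <= j)%N) (iota 0 (size ns)).

Definition no_block_in_one_part (ns : seq nat)
    (P : {set {set 'I_(sumn ns)}}) : bool :=
  [forall B in P, exists x in B, exists y in B, seg ns x != seg ns y].
Arguments no_block_in_one_part : clear implicits.

(* Main.v *)
Require Import Defs.
From HB Require Import structures.
From mathcomp Require Import all_boot all_order all_algebra.
From Stdlib Require Import Lia.
Import GRing.Theory.
Module MA.
Set Implicit Arguments. Unset Strict Implicit. Unset Printing Implicit Defensive.

Lemma enum_sorted N (S : {set 'I_N}) :
  sorted (fun x y : 'I_N => (x < y)%N) (enum S).
Proof.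
have H : sorted (fun x y : 'I_N => (x < y)%N) (enum 'I_N).
  by have := iota_ltn_sorted 0 N; rewrite -val_enum_ord sorted_map.
rewrite /enum_mem -enumT; apply: sorted_filter => //.
by move=> x y z; apply: ltn_trans.
Qed.

Lemma enum_val_mono N (S : {set 'I_N}) (i j : 'I_#|S|) :
  (i < j)%N -> (enum_val i < enum_val j)%N.
Proof.
move=> ij; have x0 := enum_val i.
rewrite (enum_val_nth x0) (enum_val_nth x0).
have tr : transitive (fun x y : 'I_N => (x < y)%N) by move=> x y z; apply: ltn_trans.
apply: (sorted_ltn_nth tr x0 (enum_sorted S)) => //.
- by rewrite inE -cardE.
- by rewrite inE -cardE.
Qed.

Lemma noncrossingP m (P : {set {set 'I_m}}) :
  reflect (forall B B' (a b c d : 'I_m), B \in P -> B' \in P -> B != B' ->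
             (a < b)%N -> (b < c)%N -> (c < d)%N ->
             a \in B -> c \in B -> b \in B' -> d \in B' -> False)
          (noncrossing m P).
Proof.
apply: (iffP idP).
  move=> H B B' a b c d HB HB' nB ab bc cd aB cB bB dB.
  move/forall_inP: H => /(_ B HB) /forall_inP /(_ B' HB') /forallP /(_ a)
     /forallP /(_ b) /forallP /(_ c) /forallP /(_ d) /negP; apply.
  by rewrite nB ab bc cd aB cB bB dB.
move=> H; apply/forall_inP => B HB; apply/forall_inP => B' HB'.
apply/forallP => a; apply/forallP => b; apply/forallP => c; apply/forallP => d.
apply/negP => /and5P [nB ab bc cd /and4P [aB cB bB dB]].
exact: (H B B' a b c d).
Qed.

Definition ncu_on N s (S : {set 'I_N}) (P : {set {set 'I_N}}) :=
  [&& partition P S, noncrossing N P & [forall B in P, #|B| == s]].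

Section Transport.
Variables (m N : nat) (f : 'I_m -> 'I_N).
Hypothesis finj : injective f.
Hypothesis fmono : forall i j : 'I_m, (i < j)%N -> (f i < f j)%N.

Lemma fmonoE i j : (f i < f j)%N = (i < j)%N.
Proof.
case: (ltngtP i j) => [/fmono -> //| /fmono /ltnW| /val_inj ->]; last by rewrite ltnn.
by rewrite leqNgt => /negbTE.
Qed.

Lemma noncrossing_imset (Q : {set {set 'I_m}}) :
  noncrossing N [set f @: (B : {set 'I_m}) | B in Q] = noncrossing m Q.
Proof.
apply/noncrossingP/noncrossingP => H.
  move=> B B' a b c d HB HB' nB ab bc cd aB cB bB dB.
  apply: (H (f @: B) (f @: B') (f a) (f b) (f c) (f d)); rewrite ?fmonoE ?imset_f //.
  by rewrite (inj_eq (imset_inj finj)).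
move=> B1 B1' a b c d /imsetP [B HB ->] /imsetP [B' HB' ->].
rewrite (inj_eq (imset_inj finj)) => nB.
move=> ab bc cd /imsetP [a0 a0B Ea] /imsetP [c0 c0B Ec] /imsetP [b0 b0B Eb] /imsetP [d0 d0B Ed].
subst a b c d; rewrite !fmonoE in ab bc cd.
exact: (H B B' a0 b0 c0 d0).
Qed.

Lemma ncu_on_imset s (Q : {set {set 'I_m}}) :
  ncu_on s (f @: setT) [set f @: (B : {set 'I_m}) | B in Q] = ncu_on s setT Q.
Proof.
rewrite /ncu_on imset_partition // noncrossing_imset; congr [&& _, _ & _].
apply/forall_inP/forall_inP => H B.
  by move=> HB; rewrite -(card_imset _ finj); apply: H; rewrite imset_f.
by move=> /imsetP [B0 HB0 ->]; rewrite card_imset //; apply: H.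
Qed.
End Transport.

Lemma card_ncu_on N s (S : {set 'I_N}) :
  #|[set P | ncu_on s S P]| = #|[set Q : {set {set 'I_#|S|}} | ncu_on s setT Q]|.
Proof.
set f := @enum_val _ (pred_of_set S).
have finj : injective f := @enum_val_inj _ _.
have fmono : forall i j : 'I_#|S|, (i < j)%N -> (f i < f j)%N := @enum_val_mono N S.
have fS : f @: setT = S.
  apply/setP => x; apply/imsetP/idP => [[i _ ->]|xS]; first exact: enum_valP.
  by exists (enum_rank_in xS x) => //; rewrite /f enum_rankK_in.
pose Phi (Q : {set {set 'I_#|S|}}) := [set f @: (B : {set 'I_#|S|}) | B in Q].
have Pinj : injective Phi by apply: imset_inj; apply: imset_inj.
rewrite -(card_imset _ Pinj); apply: eq_card => P; rewrite inE.
apply/idP/imsetP => [HP|[Q]]; last first.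
  by rewrite inE => HQ ->; have := HQ; rewrite -(ncu_on_imset finj fmono) fS.
have H : forall B, B \in P -> f @: (f @^-1: B) = B.
  move=> B HB; apply/setP => x; apply/imsetP/idP => [[i]|xB]; first by rewrite inE => ? ->.
  have xS : x \in S.
    by case/and3P: HP => HP1 _ _; exact: (subsetP (partitionS HP1 HB)).
  by exists (enum_rank_in xS x); rewrite ?inE /f enum_rankK_in.
set Q0 := [set f @^-1: (B : {set 'I_N}) | B in P].
have HPhi : Phi Q0 = P.
  apply/setP => B; apply/imsetP/idP => [[B1 /imsetP [B0 HB0 ->] ->]|HB]; first by rewrite H.
  by exists (f @^-1: B); rewrite ?H // imset_f.
exists Q0 => //.
by rewrite inE -(ncu_on_imset finj fmono) fS -/(Phi Q0) HPhi.
Qed.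

Lemma card_ncu_on_mu N t (S : {set 'I_N}) :
  #|[set P | ncu_on t.+1 S P]| = mu t #|S|.
Proof. by rewrite card_ncu_on. Qed.

End MA.
Import MA.
Module MB.
Set Implicit Arguments. Unset Strict Implicit. Unset Printing Implicit Defensive.

Lemma disjP (T : finType) (A B : {set T}) :
  reflect (forall x, x \in A -> x \in B -> False) [disjoint A & B].
Proof.
rewrite -setI_eq0; apply: (iffP eqP) => [H x xA xB|H].
  have : x \in A :&: B by rewrite inE xA xB.
  by rewrite H inE.
by apply/setP => x; rewrite !inE; apply/andP => -[]; apply: H.
Qed.

Section Intervals.
Variables (N t : nat).

Definition iv (i : 'I_N) : {set 'I_N} := [set j : 'I_N | (i <= j <= i + t)%N].

Lemma iv_card_gen (a k : nat) : (a + k < N)%N ->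
  #|[set j : 'I_N | (a <= j <= a + k)%N]| = k.+1.
Proof.
elim: k => [|k IH] H.
  have aN : (a < N)%N by rewrite addn0 in H.
  rewrite -(cards1 (Ordinal aN)); apply: eq_card => j; rewrite !inE addn0.
  by rewrite -eqn_leq eq_sym -val_eqE.
have aN : (a + k.+1 < N)%N by [].
have -> : [set j : 'I_N | (a <= j <= a + k.+1)%N] =
          Ordinal aN |: [set j : 'I_N | (a <= j <= a + k)%N].
  apply/setP => j; rewrite !inE -val_eqE /= addnS (leq_eqVlt j) ltnS.
  case: (eqVneq (val j) (a+k).+1) => [->|_] /=; last by [].
  by rewrite ltnW // ltnS leq_addr.
rewrite cardsU1 IH; last by apply: leq_ltn_trans H; rewrite leq_add2l.
by rewrite inE /= leq_add2l ltnn andbF.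
Qed.

Lemma iv_card (i : 'I_N) : (i + t < N)%N -> #|iv i| = t.+1.
Proof. exact: iv_card_gen. Qed.

Lemma iv_self (i : 'I_N) : i \in iv i.
Proof. by rewrite inE leqnn leq_addr. Qed.

Lemma iv_inj : injective iv.
Proof.
move=> i j E; have h1 := iv_self i; have h2 := iv_self j.
rewrite E inE in h1; rewrite -E inE in h2.
case/andP: h1 => h1 _; case/andP: h2 => h2 _.
by apply: ord_inj; apply/eqP; rewrite eqn_leq h1 h2.
Qed.

Lemma iv_convex (i a b c : 'I_N) : (a <= b <= c)%N -> a \in iv i -> c \in iv i -> b \in iv i.
Proof.
rewrite !inE => /andP [ab bc] /andP [ia _] /andP [_ ct].
by rewrite (leq_trans ia ab) (leq_trans bc ct).
Qed.

Definition pairwise_sep (F : {set 'I_N}) :=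
  [forall i in F, forall j in F, (i < j)%N ==> (i + t < j)%N].

Definition ivs (F : {set 'I_N}) := [set iv i | i in F].

Lemma ivs_triv F : pairwise_sep F -> trivIset (ivs F).
Proof.
move=> /forall_inP H; apply/trivIsetP => B B' /imsetP [i iF ->] /imsetP [j jF ->] nij.
have key : forall i j : 'I_N, i \in F -> j \in F -> (i < j)%N -> [disjoint iv i & iv j].
  move=> i0 j0 i0F j0F lt; apply/disjP => x; rewrite !inE => /andP [_ xi] /andP [jx _].
  move: (H i0 i0F) => /forall_inP /(_ j0 j0F) /implyP /(_ lt) => lt2.
  by have := leq_ltn_trans xi lt2; rewrite ltnNge jx.
case: (ltngtP i j) => [lt|lt|/val_inj E]; first exact: key.
  by rewrite disjoint_sym; apply: key.
by rewrite E eqxx in nij.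
Qed.

Lemma cover_ivs_card F : pairwise_sep F -> [forall i in F, (i + t < N)%N] ->
  #|cover (ivs F)| = (t.+1 * #|F|)%N.
Proof.
move=> H /forall_inP HN; have := ivs_triv H; rewrite /trivIset => /eqP <-.
rewrite /ivs big_imset /=; last by move=> i j _ _; apply: iv_inj.
rewrite (eq_bigr (fun _ => t.+1)); last by move=> i iF; exact: iv_card (HN i iF).
by rewrite sum_nat_const mulnC.
Qed.

End Intervals.

End MB.
Import MB.
Module MC.
Set Implicit Arguments. Unset Strict Implicit. Unset Printing Implicit Defensive.

Lemma partition_disj (T : finType) (P : {set {set T}}) D B B' x :
  partition P D -> B \in P -> B' \in P -> B != B' -> x \in B -> x \in B' -> False.
Proof.
move=> /partition_trivIset /trivIsetP H HB HB' nB.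
by move: (H B B' HB HB' nB) => /disjP; apply.
Qed.

Lemma nc_sub m (P Q : {set {set 'I_m}}) :
  P \subset Q -> noncrossing m Q -> noncrossing m P.
Proof.
move=> /subsetP sPQ /noncrossingP H; apply/noncrossingP => B B' a b c d HB HB'.
exact: (H B B' a b c d (sPQ _ HB) (sPQ _ HB')).
Qed.

Section Adding.
Variables (N t : nat) (g : nat -> nat).

Definition good (i : 'I_N) := (i + t < N)%N && (g i == g (i + t)).
Definition validF (F : {set 'I_N}) := [forall i in F, good i] && pairwise_sep t F.
Definition Istarts (s : {set {set 'I_N}}) := [set i : 'I_N | good i && (iv t i \in s)].

Lemma Istarts_valid s (F : {set 'I_N}) : partition s setT -> F \subset Istarts s -> validF F.
Proof.
move=> Hs /subsetP sF; apply/andP; split.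
  by apply/forall_inP => i /sF; rewrite inE => /andP [].
apply/forall_inP => i iF; apply/forall_inP => j jF; apply/implyP => ij.
move: (sF i iF) (sF j jF); rewrite !inE => /andP [_ Hi] /andP [_ Hj].
rewrite ltnNge; apply/negP => jit.
have nij : iv t i != iv t j by rewrite (inj_eq (@iv_inj N t)) -val_eqE neq_ltn ij.
apply: (partition_disj Hs Hi Hj nij (x := j)); last exact: iv_self.
by rewrite inE (ltnW ij) jit.
Qed.

Variable F : {set 'I_N}.
Hypothesis HF : validF F.
Let U := cover (ivs t F).

Lemma ivU i : i \in F -> iv t i \subset U.
Proof.
move=> iF; apply/subsetP => x xi; apply/bigcupP; exists (iv t i) => //.
by rewrite imset_f.
Qed.

Lemma ncu_disj P : ncu_on t.+1 (~: U) P -> forall B, B \in P -> B \notin ivs t F.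
Proof.
case/and3P => HP _ _ B HB; apply/negP => /imsetP [i iF EB].
have := partitionS HP HB; rewrite EB => /subsetP /(_ i (iv_self t i)).
by rewrite inE => /negP; apply; apply: (subsetP (ivU iF)); apply: iv_self.
Qed.

Lemma fwd P : ncu_on t.+1 (~: U) P ->
  ncu_on t.+1 setT (P :|: ivs t F) && (F \subset Istarts (P :|: ivs t F)).
Proof.
move=> HPall; have dP := ncu_disj HPall; case/and3P: HPall => HP ncP szP.
case/andP: HF => /forall_inP Hgood Hsep.
have Hpart : partition (P :|: ivs t F) setT.
  apply/and3P; split.
  - rewrite /cover bigcup_setU -/(cover P) -/U (cover_partition HP).
    by apply/eqP/setP => x; rewrite !inE orNb.
  - apply: trivIsetU; [exact: partition_trivIset HP| exact: ivs_triv Hsep|].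
    by rewrite (cover_partition HP); apply/disjP => x; rewrite inE => /negP.
  - rewrite !inE negb_or (partition0 HP) /=; apply/imsetP => -[i _ E].
    by have := iv_self t i; rewrite -E inE.
apply/andP; split; last first.
  apply/subsetP => i iF; rewrite inE; move: (Hgood i iF) => -> /=.
  by rewrite inE orbC imset_f.
apply/and3P; split => //.
  apply/noncrossingP => B B' a b c d HB HB' nB ab bc cd aB cB bB dB.
  case/setUP: (HB) => [PB|/imsetP [i iF EB]]; last first.
    apply: (partition_disj Hpart HB HB' nB _ bB).
    by rewrite EB in aB cB *; apply: (iv_convex _ aB cB); rewrite (ltnW ab) (ltnW bc).
  case/setUP: (HB') => [PB'|/imsetP [j jF EB']]; last first.
    apply: (partition_disj Hpart HB HB' nB cB).
    by rewrite EB' in bB dB *; apply: (iv_convex _ bB dB); rewrite (ltnW cd) (ltnW bc).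
  by move/noncrossingP: ncP => /(_ B B' a b c d PB PB' nB ab bc cd aB cB bB dB).
apply/forall_inP => B /setUP [/(forall_inP szP) //|/imsetP [i iF ->]].
move: (Hgood i iF) => /andP [Hi _].
by rewrite iv_card.
Qed.

Lemma bwd s : ncu_on t.+1 setT s -> F \subset Istarts s ->
  ncu_on t.+1 (~: U) (s :\: ivs t F) /\ (s :\: ivs t F) :|: ivs t F = s.
Proof.
case/and3P => Hs ncs szs /subsetP sF.
have ivs_s : ivs t F \subset s.
  by apply/subsetP => B /imsetP [i iF ->]; move: (sF i iF); rewrite inE => /andP [].
split; last first.
  apply/setP => B; rewrite !inE; case: (boolP (B \in ivs t F)) => /= HB.
    by rewrite (subsetP ivs_s).
  by rewrite orbF.
apply/and3P; split.
- apply/and3P; split.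
  + apply/eqP/setP => x; rewrite inE; apply/bigcupP/idP.
      move=> [B]; rewrite inE => /andP [nB Bs] xB; apply/negP => /bigcupP [B' HB' xB'].
      apply: (partition_disj Hs Bs (subsetP ivs_s _ HB') _ xB xB').
      by apply: contraNneq nB => ->.
    move=> xU; have := cover_partition Hs; move/setP/(_ x); rewrite inE.
    move=> /bigcupP [B Bs xB]; exists B => //; rewrite inE Bs andbT.
    by apply: contraNN xU => HB; apply/bigcupP; exists B.
  + exact: trivIsetD (partition_trivIset Hs).
  + by rewrite inE (partition0 Hs) andbF.
- by apply: nc_sub ncs; apply: subsetDl.
- by apply/forall_inP => B; rewrite inE => /andP [_ /(forall_inP szs)].
Qed.

Lemma count_adding :
  #|[set P | ncu_on t.+1 (~: U) P]| =
  #|[set s | ncu_on t.+1 setT s && (F \subset Istarts s)]|.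
Proof.
have hinj : {in [set P | ncu_on t.+1 (~: U) P] &, injective (fun P => P :|: ivs t F)}.
  move=> P1 P2; rewrite !inE => H1 H2 E; apply/setP => B.
  move/setP/(_ B): E; rewrite !inE.
  case: (boolP (B \in P1)) => B1; case: (boolP (B \in P2)) => B2 //=.
    by move=> E2; move: (ncu_disj H1 B1); rewrite -E2.
  by move=> E2; move: (ncu_disj H2 B2); rewrite E2.
rewrite -(card_in_imset hinj); apply: eq_card => s; rewrite inE.
apply/imsetP/idP => [[P]|/andP [Hs sF]].
  by rewrite inE => HP ->; apply: fwd.
have [H1 H2] := bwd Hs sF.
by exists (s :\: ivs t F); rewrite ?inE.
Qed.

End Adding.

End MC.
Import MC.
Module MD.
Set Implicit Arguments. Unset Strict Implicit. Unset Printing Implicit Defensive.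

Ltac nlia :=
  repeat match goal with
  | H : is_true (_ && _) |- _ => apply (elimT andP) in H; destruct H
  | H : is_true (leq _ _) |- _ => apply (elimT leP) in H
  end; try (apply/andP; split); try done; try (apply/leP);
  unfold subn, subn_rec, addn, addn_rec, muln, muln_rec in *; lia.

Section Key.
Variables (N t : nat) (g : nat -> nat).
Hypothesis gmono : forall x y, (x <= y)%N -> (g x <= g y)%N.
Variable s : {set {set 'I_N}}.
Hypothesis Hs : ncu_on t.+1 setT s.

Lemma gsand x y z : (x <= y <= z)%N -> g x = g z -> g y = g x.
Proof.
case/andP => xy yz E; apply/eqP; rewrite eqn_leq (gmono xy) andbT E.
exact: gmono yz.
Qed.

Lemma key_ind n : forall (a c : nat) (B : {set 'I_N}),
  (c - a < n)%N -> (c < N)%N -> B \in s ->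
  (forall x : 'I_N, x \in B -> (a <= x <= c)%N) ->
  (forall x y : 'I_N, x \in B -> y \in B -> g x = g y) ->
  exists i, i \in Istarts t g s.
Proof.
case/and3P: Hs => Hpart ncs szs.
elim: n => [//|n IH] a c B lt cN HB inB gB.
have [x0 x0B] : exists x0, x0 \in B.
  by apply/set0Pn; apply: (partition_neq0 Hpart HB).
have /andP [ax0 x0c] := inB x0 x0B.
have ac : (a <= c)%N := leq_trans ax0 x0c.
have aN : (a < N)%N := leq_ltn_trans ac cN.
case: (boolP [exists j : 'I_N, (a <= j <= c)%N && (j \notin B)]) => [/existsP [j /andP [ajc jB]]|Hall].
  case: (boolP (Ordinal aN \in B)) => aB; last first.
    have xa : forall x : 'I_N, x \in B -> (a < x)%N.
      move=> x xB; have /andP [ax _] := inB x xB.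
      case: (ltngtP a x) => // [xa|E]; first by rewrite leqNgt xa in ax.
      have E' : Ordinal aN = x by apply: ord_inj.
      by rewrite E' xB in aB.
    have ax0' := xa x0 x0B.
    have ac' : (a < c)%N := leq_trans ax0' x0c.
    clear -lt cN ac' IH HB inB gB xa.
    apply: (IH a.+1 c B) => //; first by nlia.
    by move=> x xB; have /andP [_ xc] := inB x xB; rewrite xc xa.
  case: (boolP (Ordinal cN \in B)) => cB; last first.
    have xc : forall x : 'I_N, x \in B -> (x < c)%N.
      move=> x xB; have /andP [_ xc] := inB x xB.
      case: (ltngtP x c) => // [cx|E]; first by rewrite leqNgt cx in xc.
      have E' : Ordinal cN = x by apply: ord_inj.
      by rewrite E' xB in cB.
    have x0c' := xc x0 x0B.
    have ac' : (a < c)%N := leq_ltn_trans ax0 x0c'.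
    clear -lt cN ac' IH HB inB gB xc.
    apply: (IH a c.-1 B) => //; [by nlia | by nlia |].
    move=> x xB; have /andP [ax _] := inB x xB; rewrite ax /=.
    by have h := xc x xB; nlia.
  have [B' HB' jB'] : exists2 B', B' \in s & j \in B'.
    by have := cover_partition Hpart; move/setP/(_ j); rewrite inE => /bigcupP [B' ? ?]; exists B'.
  have nBB : B' != B by apply: contraNneq jB => <-.
  have aj : (a < j)%N.
    case/andP: ajc => aj _; case: (ltngtP a j) => // [ja|E]; first by rewrite leqNgt ja in aj.
    have E' : Ordinal aN = j by apply: ord_inj.
    by rewrite -E' aB in jB.
  have jc : (j < c)%N.
    case/andP: ajc => _ jc; case: (ltngtP j c) => // [cj|E]; first by rewrite leqNgt cj in jc.
    have E' : Ordinal cN = j by apply: ord_inj.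
    by rewrite -E' cB in jB.
  have inB' : forall y : 'I_N, y \in B' -> (a.+1 <= y <= c.-1)%N.
    move=> y yB'.
    case: (ltngtP y a) => [ya|ay|ya].
    - exfalso; move/noncrossingP: ncs.
      by move=> /(_ B' B y (Ordinal aN) j (Ordinal cN) HB' HB nBB ya aj jc yB' jB' aB cB).
    - case: (ltngtP y c) => [yc|cy|yc].
      + by nlia.
      + exfalso; move/noncrossingP: ncs.
        have nBB' : B != B' by rewrite eq_sym.
        by move=> /(_ B B' (Ordinal aN) j (Ordinal cN) y HB HB' nBB' aj jc cy aB cB jB' yB').
      + exfalso; apply: (partition_disj Hpart HB HB' (x := y)); first by rewrite eq_sym.
          by have -> : y = Ordinal cN by apply: ord_inj.
        by [].
    - exfalso; apply: (partition_disj Hpart HB HB' (x := y)); first by rewrite eq_sym.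
        by have -> : y = Ordinal aN by apply: ord_inj.
      by [].
  have ac2 : (a.+1 < c)%N := leq_ltn_trans aj jc.
  apply: (IH a.+1 c.-1 B') => //; [by clear -lt ac2; nlia | by clear -cN; nlia |].
  have gac : g a = g c.
    by have := gB (Ordinal aN) (Ordinal cN) aB cB.
  move=> x y xB yB; have hx := inB' x xB; have hy := inB' y yB.
  have ex : g x = g a by apply: (gsand _ gac); nlia.
  have ey : g y = g a by apply: (gsand _ gac); nlia.
  by rewrite ex ey.
have EB : B = [set j : 'I_N | (a <= j <= a + (c - a))%N].
  apply/setP => x; rewrite inE subnKC //; apply/idP/idP; first exact: inB.
  move=> hx; apply: contraNT Hall => xB; apply/existsP; exists x; by rewrite hx.
have Bc : #|B| = (c - a).+1 by rewrite EB iv_card_gen // subnKC.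
have ct : (c - a = t)%N.
  by move/forall_inP: szs => /(_ B HB) /eqP; rewrite Bc => -[].
exists (Ordinal aN); rewrite inE; apply/andP; split.
  rewrite /good /= -ct subnKC // cN /=.
  have aB : Ordinal aN \in B by rewrite EB inE leqnn /= subnKC.
  have cB : Ordinal cN \in B by rewrite EB inE /= subnKC // ac leqnn.
  by apply/eqP; apply: (gB _ _ aB cB).
by rewrite /iv /= -ct -EB.
Qed.

Lemma Dkey : (Istarts t g s == set0) =
  [forall B in s, exists x in B, exists y in B, g x != g y].
Proof.
case/and3P: (Hs) => Hpart ncs szs.
apply/eqP/forall_inP.
  move=> E B HB; case: (boolP [exists x in B, exists y in B, g x != g y]) => // H.
  exfalso.
  have gB : forall x y : 'I_N, x \in B -> y \in B -> g x = g y.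
    move=> x y xB yB; apply/eqP; apply: contraNT H => ne.
    by apply/exists_inP; exists x => //; apply/exists_inP; exists y.
  have [x0 x0B] : exists x0, x0 \in B.
    by apply/set0Pn; apply: (partition_neq0 Hpart HB).
  have N0 : (0 < N)%N by apply: leq_ltn_trans (leq0n x0) (ltn_ord x0).
  have cN : (N.-1 < N)%N by rewrite ltn_predL.
  have inB : forall x : 'I_N, x \in B -> (0 <= x <= N.-1)%N.
    by move=> x _; rewrite leq0n /= -ltnS prednK.
  have [i] := @key_ind N 0 N.-1 B (leq_ltn_trans (leq_subr _ _) cN) cN HB inB gB.
  by rewrite E inE.
move=> H; apply/setP => i; rewrite inE in_set0; apply/negP => /andP [/andP [iN /eqP gi] ivs].
have /exists_inP [x xi /exists_inP [y yi /negP]] := H _ ivs; apply.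
have hx : g x = g i by apply: (gsand _ gi); rewrite inE in xi.
have hy : g y = g i by apply: (gsand _ gi); rewrite inE in yi.
by rewrite hx hy.
Qed.
End Key.

End MD.
Import MD.
Module ME.
Set Implicit Arguments. Unset Strict Implicit. Unset Printing Implicit Defensive.

Lemma seg_mono ns x y : (x <= y)%N -> (seg ns x <= seg ns y)%N.
Proof.
move=> xy; apply: sub_count => i /= H; exact: leq_trans H xy.
Qed.

Lemma seg_cons n ns j :
  seg (n :: ns) j = if (j < n)%N then 0%N else (seg ns (j - n)).+1.
Proof.
rewrite /seg /= -add1n iotaDl count_map /= take0 addn0.
case: ltnP => jn.
  rewrite /= ?add0n (@eq_in_count _ _ pred0) ?count_pred0 // => i _ /=.
  apply/negbTE; rewrite -ltnNge; nlia.
rewrite ?add1n; congr _.+1; apply: eq_count => i /=.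
by rewrite add1n; apply/idP/idP => H; nlia.
Qed.

Local Open Scope ring_scope.

Lemma Lt_widen t (p : {poly int}) K : (size p <= K)%N ->
  Lt t p = \sum_(i < K) p`_i * (mu t i)%:Z.
Proof.
move=> H; rewrite /Lt (big_ord_widen K (fun i => p`_i * (mu t i)%:Z) H) big_mkcond /=.
apply: eq_bigr => i _; case: ifP => // /negbT; rewrite -leqNgt => Hi.
by rewrite nth_default // mul0r.
Qed.

Lemma LtD t (p q : {poly int}) : Lt t (p + q) = Lt t p + Lt t q.
Proof.
set K := maxn (size p) (size q).
have h1 : (size (p + q)%R <= K)%N by apply: size_polyD.
have h2 : (size p <= K)%N by apply: leq_maxl.
have h3 : (size q <= K)%N by apply: leq_maxr.
rewrite (Lt_widen t h1) (Lt_widen t h2) (Lt_widen t h3) -big_split /=.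
by apply: eq_bigr => i _; rewrite coefD mulrDl.
Qed.

Lemma Lt0 t : Lt t 0 = 0.
Proof. by rewrite /Lt size_poly0 big_ord0. Qed.

Lemma LtZX t c d : Lt t (c *: 'X^d) = c * (mu t d)%:Z.
Proof.
have h : (size (c *: 'X^d) <= d.+1)%N.
  by rewrite (leq_trans (size_scale_leq _ _)) // size_polyXn.
rewrite (Lt_widen t h) big_ord_recr /= big1 ?add0r.
  by rewrite coefZ coefXn eqxx mulr1.
move=> i _; rewrite coefZ coefXn.
have /negbTE -> : (i : nat) != d by rewrite neq_ltn ltn_ord.
by rewrite mulr0 mul0r.
Qed.

Lemma Lt_sum t (I : finType) (P : pred I) (G : I -> {poly int}) :
  Lt t (\sum_(i | P i) G i) = \sum_(i | P i) Lt t (G i).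
Proof. exact: (big_morph (Lt t) (LtD t) (Lt0 t)). Qed.

Lemma alt_sum (T : finType) (A : {set T}) :
  \sum_(F : {set T} | F \subset A) (-1) ^+ #|F| = ((A == set0)%:R : int).
Proof.
case: (set_0Vmem A) => [->|[a aA]].
  rewrite eqxx (eq_bigl (fun F => F == set0)); last by move=> F; rewrite subset0.
  by rewrite big_pred1_eq cards0 expr0.
have /negbTE -> : A != set0 by apply/set0Pn; exists a.
pose h (F : {set T}) := if a \in F then F :\ a else a |: F.
have hK : involutive h.
  move=> F; rewrite /h; case: (boolP (a \in F)) => aF.
    by rewrite setD11 setD1K.
  by rewrite setU11 setU1K.
rewrite (bigID (fun F : {set T} => a \in F)) /=.
rewrite [X in X + _](reindex_inj (inv_inj hK)) /=.
rewrite [X in X + _](eq_bigl (fun F : {set T} => (F \subset A) && (a \notin F))); last first.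
  move=> F; rewrite /h; case: (boolP (a \in F)) => aF /=.
    by rewrite setD11 !andbF.
  by rewrite setU11 !andbT subUset sub1set aA.
rewrite -big_split big1 // => F /andP [FA aF] /=.
by rewrite /h (negbTE aF) cardsU1 aF add1n exprS mulN1r addNr.
Qed.

End ME.
Import ME.
Module MF.
Set Implicit Arguments. Unset Strict Implicit. Unset Printing Implicit Defensive.

Lemma sep_bound N t (F : {set 'I_N}) : pairwise_sep t F ->
  [forall i in F, (i + t < N)%N] -> (t.+1 * #|F| <= N)%N.
Proof.
move=> H1 H2; rewrite -(cover_ivs_card H1 H2).
by apply: leq_trans (max_card _) _; rewrite card_ord.
Qed.

Lemma valid_bound N t g (F : {set 'I_N}) : validF t g F -> (t.+1 * #|F| <= N)%N.
Proof.
case/andP => /forall_inP H1 H2; apply: sep_bound H2 _.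
by apply/forall_inP => i /H1 /andP [].
Qed.

Lemma cheb_bound t n (F : {set 'I_n}) : tpath_family t n F -> (t.+1 * #|F| <= n)%N.
Proof. by case/andP => H1 H2; apply: sep_bound H2 H1. Qed.

Lemma ord_split m n (x : 'I_(m + n)) :
  (exists i, x = lshift n i) \/ (exists j, x = rshift m j).
Proof.
case: (splitP x) => [i E|j E]; [left; exists i | right; exists j]; exact: val_inj.
Qed.

Section Split.
Variables (t n : nat) (ns : seq nat).
Let M := sumn ns.

Definition hsplit (p : {set 'I_n} * {set 'I_M}) : {set 'I_(n + M)} :=
  lshift M @: p.1 :|: @rshift n M @: p.2.
Definition ksplit (F : {set 'I_(n + M)}) : {set 'I_n} * {set 'I_M} :=
  (lshift M @^-1: F, @rshift n M @^-1: F).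

Lemma lr_neq (i : 'I_n) (j : 'I_M) : (lshift M i == rshift n j) = false.
Proof.
apply/negbTE; rewrite -val_eqE /= neq_ltn; apply/orP; left.
exact: leq_trans (ltn_ord i) (leq_addr _ _).
Qed.

Lemma mem_h_l F1 F2 (i : 'I_n) : (lshift M i \in hsplit (F1, F2)) = (i \in F1).
Proof.
rewrite inE mem_imset /=; last exact: lshift_inj.
case: (i \in F1) => //=; apply/imsetP => -[j _ /eqP]; by rewrite lr_neq.
Qed.

Lemma mem_h_r F1 F2 (j : 'I_M) : (@rshift n M j \in hsplit (F1, F2)) = (j \in F2).
Proof.
rewrite inE (mem_imset _ _ (@rshift_inj n M)) /=.
case: (j \in F2); rewrite ?orbT //= orbF; apply/imsetP => -[i _ /eqP]; by rewrite eq_sym lr_neq.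
Qed.

Lemma hK : cancel hsplit ksplit.
Proof.
move=> [F1 F2]; rewrite /ksplit; congr (_, _); apply/setP => x; rewrite inE.
  by rewrite mem_h_l.
by rewrite mem_h_r.
Qed.

Lemma kK : cancel ksplit hsplit.
Proof.
move=> F; apply/setP => x; case: (ord_split x) => [[i ->]|[j ->]].
  by rewrite mem_h_l inE.
by rewrite mem_h_r inE.
Qed.

Lemma card_h F1 F2 : #|hsplit (F1, F2)| = (#|F1| + #|F2|)%N.
Proof.
rewrite /hsplit cardsU !card_imset; try exact: lshift_inj; try exact: rshift_inj.
have -> : lshift M @: F1 :&: @rshift n M @: F2 = set0.
  apply/setP => x; rewrite !inE; apply/andP => -[/imsetP [i _ ->] /imsetP [j _ /eqP]].
  by rewrite lr_neq.
by rewrite cards0 subn0.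
Qed.

Lemma good_l (i : 'I_n) : good t (seg (n :: ns)) (lshift M i) = (i + t < n)%N.
Proof.
rewrite /good /= !seg_cons (ltn_ord i).
case: (ltnP (i + t) n) => H /=; last by rewrite andbF.
by rewrite eqxx andbT (leq_trans H) // leq_addr.
Qed.

Lemma good_r (j : 'I_M) : good t (seg (n :: ns)) (@rshift n M j) = good t (seg ns) j.
Proof.
rewrite /good /= !seg_cons -addnA !ltnNge !leq_addr /= addKn addKn eqSS.
by rewrite -!ltnNge ltn_add2l.
Qed.

Lemma valid_h F1 F2 :
  validF t (seg (n :: ns)) (hsplit (F1, F2)) = tpath_family t n F1 && validF t (seg ns) F2.
Proof.
apply/idP/idP.
  case/andP => /forall_inP Hg /forall_inP Hs.
  have g1 : forall i, i \in F1 -> (i + t < n)%N.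
    by move=> i iF; rewrite -good_l; apply: Hg; rewrite mem_h_l.
  have g2 : forall j, j \in F2 -> good t (seg ns) j.
    by move=> j jF; rewrite -good_r; apply: Hg; rewrite mem_h_r.
  apply/andP; split; apply/andP; split.
  - by apply/forall_inP.
  - apply/forall_inP => i iF; apply/forall_inP => i' i'F.
    have := Hs (lshift M i); rewrite mem_h_l => /(_ iF) /forall_inP /(_ (lshift M i')).
    by rewrite mem_h_l => /(_ i'F).
  - by apply/forall_inP.
  - apply/forall_inP => j jF; apply/forall_inP => j' j'F.
    have := Hs (@rshift n M j); rewrite mem_h_r => /(_ jF) /forall_inP /(_ (@rshift n M j')).
    rewrite mem_h_r => /(_ j'F) /=.
    by rewrite ltn_add2l -addnA ltn_add2l.
case/andP => /andP [/forall_inP g1 /forall_inP s1] /andP [/forall_inP g2 /forall_inP s2].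
apply/andP; split.
  apply/forall_inP => x; case: (ord_split x) => [[i ->]|[j ->]].
    by rewrite mem_h_l good_l; apply: g1.
  by rewrite mem_h_r good_r; apply: g2.
rewrite /pairwise_sep; apply/forall_inP => x xH; apply/forall_inP => y yH; apply/implyP.
move: xH yH; case: (ord_split x) => [[i ->]|[j ->]]; case: (ord_split y) => [[i' ->]|[j' ->]].
- by rewrite !mem_h_l => iF i'F; move/forall_inP: (s1 i iF) => /(_ i' i'F) /implyP.
- rewrite mem_h_l mem_h_r => iF _ _ /=.
  exact: leq_trans (g1 i iF) (leq_addr _ _).
- rewrite mem_h_l mem_h_r => _ _ /= H; exfalso.
  have := leq_ltn_trans (leq_addr j n) H; rewrite ltnNge (ltnW (ltn_ord i')) //.
- rewrite !mem_h_r => jF j'F; move/forall_inP: (s2 j jF) => /(_ j' j'F) /implyP /=.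
  by rewrite ltn_add2l -addnA ltn_add2l.
Qed.

End Split.

Local Open Scope ring_scope.

Lemma arith_sub a b x y : (x <= a)%N -> (y <= b)%N ->
  (a - x + (b - y) = a + b - (x + y))%N.
Proof. move=> h1 h2; nlia. Qed.

Definition Eexp t ns : {poly int} :=
  \sum_(F : {set 'I_(sumn ns)} | validF t (seg ns) F)
     ((-1) ^+ #|F|) *: 'X^(sumn ns - t.+1 * #|F|).

Lemma cheb_step t n ns : chebU t n * Eexp t ns = Eexp t (n :: ns).
Proof.
rewrite /chebU /Eexp big_distrl /=.
under eq_bigr do rewrite big_distrr /=.
rewrite pair_big /=.
rewrite (reindex (@hsplit n ns) (onW_bij _ (Bijective (@hK n ns) (@kK n ns)))) /=.
apply: eq_big => [[F1 F2]|[F1 F2]] /=; first by rewrite valid_h.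
move=> /andP [H1 H2].
rewrite -scalerAl -scalerAr scalerA -!exprD card_h.
have b1 := cheb_bound H1; have b2 := valid_bound H2.
congr (_ *: 'X^_).
rewrite mulnDr.
exact: arith_sub b1 b2.
Qed.

Lemma Eexp_nil t : Eexp t [::] = 1.
Proof.
rewrite /Eexp (big_pred1 set0) /=.
  by rewrite cards0 expr0 scale1r sub0n expr0.
move=> F /=; have -> : F = set0 by apply/setP => -[].
rewrite eqxx; apply/andP; split; first by apply/forall_inP => i; rewrite in_set0.
by apply/forall_inP => i; rewrite in_set0.
Qed.

Lemma prod_cheb t ns : \prod_(n <- ns) chebU t n = Eexp t ns.
Proof.
elim: ns => [|n ns IH]; first by rewrite big_nil Eexp_nil.
by rewrite big_cons IH cheb_step.
Qed.

End MF.
Import MF.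
Module MG.
Set Implicit Arguments. Unset Strict Implicit. Unset Printing Implicit Defensive.
Local Open Scope ring_scope.

Lemma card_sumZ (T : finType) (P Q : pred T) :
  (#|[set x | P x && Q x]| : int) = \sum_(x | P x) ((Q x : nat) : int).
Proof.
rewrite -sum1_card (big_morph Posz PoszD (erefl _)) /= big_mkcond [RHS]big_mkcond /=.
by apply: eq_bigr => x _; rewrite inE; case: (P x); case: (Q x).
Qed.

Lemma mu_cover N t g (F : {set 'I_N}) : validF t g F ->
  mu t (N - t.+1 * #|F|) = #|[set s | ncu_on t.+1 setT s && (F \subset Istarts t g s)]|.
Proof.
move=> HF; rewrite -count_adding // card_ncu_on_mu; congr mu.
case/andP: (HF) => /forall_inP H1 H2.
rewrite -(cover_ivs_card H2); last by apply/forall_inP => i /H1 /andP [].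
by have := cardsC (cover (ivs t F)); rewrite card_ord => {1}<-; rewrite addKn.
Qed.


End MG.
Import MG.
Local Open Scope ring_scope.

Theorem mainTheorem1 (t : nat) (ns : seq nat) : (1 <= t)%N ->
  Lt t (\prod_(n <- ns) chebU t n) =
  (#|[set P : {set {set 'I_(sumn ns)}} |
        nc_uniform (sumn ns) t.+1 P && no_block_in_one_part ns P]| : nat)%:Z.
Proof.
move=> _; rewrite prod_cheb /Eexp Lt_sum.
under eq_bigr => F HF do rewrite LtZX (mu_cover HF) card_sumZ big_distrr /=.
rewrite exchange_big /= card_sumZ.
apply: eq_bigr => s Hs.
have Hp : partition s setT by case/and3P: Hs.
rewrite (eq_bigr (fun F : {set 'I_(sumn ns)} => if F \subset Istarts t (seg ns) s then (-1) ^+ #|F| else 0)); last first.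
  by move=> F _; case: (F \subset _); rewrite ?mulr1 ?mulr0.
rewrite -big_mkcondr /=.
rewrite (eq_bigl (fun F : {set 'I_(sumn ns)} => F \subset Istarts t (seg ns) s)); last first.
  move=> F; apply/andP/idP => [[]//|H]; split => //; exact: Istarts_valid Hp H.
rewrite alt_sum (Dkey (@seg_mono ns) Hs).
by rewrite -/(no_block_in_one_part ns s); case: (no_block_in_one_part ns s).
Qed.
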